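(* Let $\mathcal V$ be a finite state space and let $0 = t(0) < \dots$ be discrete diffusion times, with $s(i) < t(i)$ for $i=1,\dots,T$ denoting the pair of consecutive times used in the $i$-th reverse step. Let $p$ (source) and $q$ (target) be two discrete diffusion models on clean data $\mathbf x_0$ and latents $\mathbf z_t \in \mathcal V$ (or sequences thereof) that share the same Markov forward (noising) process, i.e. $p(\mathbf z_t \mid \mathbf x_0) = q(\mathbf z_t \mid \mathbf x_0)$ for all $t$ and the same forward transition kernels, and assume that the density ratio $q(\mathbf x_0)/p(\mathbf x_0)$ is well defined. Let the reverse target-domain model $q_{\psi^\star}(\mathbf z_{s(i)} \mid \mathbf z_{t(i)})$ be defined as a minimizer $$\psi^\star \in \arg\min_{\psi}\ \mathbb E_{q}\Big[\sum_{i=1}^{T} D_{\mathrm{KL}}\big(q(\mathbf z_{s(i)} \mid \mathbf z_{t(i)}, \mathbf x_0)\,\big\|\,q_\psi(\mathbf z_{s(i)} \mid \mathbf z_{t(i)})\big)\Big],$$ where $\mathbf x_0 \sim q$ and $\mathbf z_{t(i)} \sim q(\cdot \mid \mathbf x_0)$. Then $$q_{\psi^\star}(\mathbf z_{s(i)} \mid \mathbf z_{t(i)}) = \frac{p(\mathbf z_{s(i)} \mid \mathbf z_{t(i)})\ \mathbb E_{\mathbf x_0 \sim p(\cdot \mid \mathbf z_{s(i)})}\!\left[\frac{q(\mathbf x_0)}{p(\mathbf x_0)}\right]}{\sum_{\tilde{\mathbf z}_{s(i)}} p(\tilde{\mathbf z}_{s(i)} \mid \mathbf z_{t(i)})\ \mathbb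 E_{\mathbf x_0 \sim p(\cdot \mid \tilde{\mathbf z}_{s(i)})}\!\left[\frac{q(\mathbf x_0)}{p(\mathbf x_0)}\right]}.$$
   Context: $p(\mathbf z_{s}\mid \mathbf z_t)$ denotes the true reverse (backward) conditional of the source diffusion model (the distribution approximated by a source-trained denoiser), $p(\mathbf x_0 \mid \mathbf z_s)$ the source posterior of clean data given the latent at time $s$, and $q(\mathbf z_s \mid \mathbf z_t, \mathbf x_0)$ the true backward posterior of the target forward process. The minimization over $\psi$ is over conditional distributions $q_\psi(\cdot \mid \mathbf z_{t(i)})$ on the latent space (one for each step $i$ and each value of $\mathbf z_{t(i)}$). $D_{\mathrm{KL}}$ is the Kullback–Leibler divergence. *)

(* Defs.v *)
From HB Require Import structures.
From mathcomp Require Import all_boot all_order all_algebra.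
From mathcomp Require Import all_classical all_reals all_analysis.
Set Implicit Arguments. Unset Strict Implicit. Unset Printing Implicit Defensive.
Import Order.TTheory GRing.Theory Num.Theory.
Local Open Scope ring_scope.

(* Discrete diffusion on a finite state space V; clean data x0 = z_0 in V.
   Reverse step i (1 <= i <= T) goes from time t(i) (index i) to
   s(i) = t(i-1) (index i-1).  The shared Markov forward process is given by
   transition kernels F i : V -> V -> R (from z_{t(i-1)} to z_{t(i)}). *)

Section DiffDefs.
Variables (R : realType) (V : finType).

Definition is_dist (a : V -> R) : Prop :=
  (forall z, 0 <= a z) /\ \sum_(z : V) a z = 1.

Definition cond_family (T : nat) (psi : nat -> V -> V -> R) : Prop :=
  forall i, (1 <= i <= T)%N -> forall zt, is_dist (psi i zt).

(* forward marginal kernel  p(z_{t(n)} = z | x0 = x) *)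
Fixpoint fwd (F : nat -> V -> V -> R) (n : nat) (x z : V) : R :=
  match n with
  | 0 => (x == z)%:R
  | m.+1 => \sum_(y : V) fwd F m x y * F m.+1 y z
  end.

Definition marg (P : V -> R) F n (z : V) : R := \sum_(x : V) P x * fwd F n x z.

Definition pjoint (P : V -> R) F i (zs zt : V) : R :=
  \sum_(x : V) P x * fwd F i.-1 x zs * F i zs zt.

Definition revcond (P : V -> R) F i (zt zs : V) : R :=
  pjoint P F i zs zt / marg P F i zt.

Definition post (P : V -> R) F j (z x : V) : R :=
  P x * fwd F j x z / marg P F j z.

Definition Epost_ratio (P Q : V -> R) F j (z : V) : R :=
  \sum_(x : V) post P F j z x * (Q x / P x).

(* backward posterior of the forward process q(z_{s(i)} = zs | z_{t(i)} = zt, x0 = x) *)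
Definition fwd_post F i (x zt zs : V) : R :=
  fwd F i.-1 x zs * F i zs zt / fwd F i x zt.

Definition KL (a b : V -> R) : \bar R :=
  (\sum_(z : V) (if a z == 0%R then 0 else
                  if b z == 0%R then +oo else (a z * ln (a z / b z))%:E))%E.

Definition objective (Q : V -> R) F (T : nat) (psi : nat -> V -> V -> R) : \bar R :=
  (\sum_(x : V) \sum_(1 <= i < T.+1) \sum_(zt : V)
      ((Q x * fwd F i x zt)%:E * KL (fwd_post F i x zt) (psi i zt)))%E.

End DiffDefs.

(* Main.v *)
Require Import Defs.
From HB Require Import structures.
From mathcomp Require Import all_boot all_order all_algebra.
From mathcomp Require Import all_classical all_reals all_analysis.
From mathcomp Require Import ring lra.
Import Order.TTheory GRing.Theory Num.Theory.
Local Open Scope ring_scope.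
Set Implicit Arguments. Unset Strict Implicit.

Lemma fwd_ge0 (R : realType) (V : finType) (T : nat) (F : nat -> V -> V -> R) :
  cond_family T F -> forall n x z, (n <= T)%N -> 0 <= fwd F n x z.
Proof.
move=> HF; elim=> [|n IH] x z hn /=; first by case: (x == z).
apply: sumr_ge0 => y _; apply: mulr_ge0; first by apply: IH; exact: ltnW.
by case: (HF n.+1 hn y).
Qed.

Lemma F_ge0 (R : realType) (V : finType) (T : nat) (F : nat -> V -> V -> R) :
  cond_family T F -> forall j y z, (1 <= j <= T)%N -> 0 <= F j y z.
Proof. by move=> HF j y z hj; case: (HF j hj y). Qed.

Lemma fwdS (R : realType) (V : finType) (F : nat -> V -> V -> R) j x z :
  (0 < j)%N -> fwd F j x z = \sum_y fwd F j.-1 x y * F j y z.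
Proof. by case: j. Qed.

Lemma cxE (R : realType) (V : finType) (T : nat) (F : nat -> V -> V -> R) (Q : V -> R) j x z zs :
  cond_family T F -> (1 <= j <= T)%N ->
  Q x * fwd F j x z * fwd_post F j x z zs = Q x * fwd F j.-1 x zs * F j zs z.
Proof.
move=> HF hj; rewrite /fwd_post.
have [h0|h0] := eqVneq (fwd F j x z) 0.
  have hj0 : (0 < j)%N by case/andP: hj.
  have hj1 : (j.-1 <= T)%N.
    by case/andP: hj => h1 h2; case: j h1 h2 {h0 hj0} => //= j _ h; exact: ltnW.
  have Hn : forall y, 0 <= fwd F j.-1 x y * F j y z.
    move=> y; apply: mulr_ge0; [exact: (fwd_ge0 HF) | exact: (F_ge0 HF)].
  have := h0; rewrite (@fwdS _ _ F j x z hj0) => /(psumr_eq0P (fun y _ => Hn y)) H.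
  have Hz : fwd F j.-1 x zs * F j zs z = 0 by exact: H.
  by rewrite Hz mul0r mulr0 -mulrA Hz mulr0.
by field.
Qed.

Lemma margE (R : realType) (V : finType) (F : nat -> V -> V -> R) (Q : V -> R) j z :
  (0 < j)%N -> marg Q F j z = \sum_zs pjoint Q F j zs z.
Proof.
move=> hj; rewrite /marg /pjoint exchange_big; apply: eq_bigr => x _.
rewrite fwdS // mulr_sumr; apply: eq_bigr => y _; by rewrite mulrA.
Qed.

Lemma marg_ge0 (R : realType) (V : finType) (T : nat) (F : nat -> V -> V -> R) (Q : V -> R) j z :
  cond_family T F -> (forall x, 0 <= Q x) -> (j <= T)%N -> 0 <= marg Q F j z.
Proof.
move=> HF HQ hj; apply: sumr_ge0 => x _; apply: mulr_ge0 => //; exact: (fwd_ge0 HF).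
Qed.

Lemma jm1 (T j : nat) : (1 <= j <= T)%N -> (j.-1 <= T)%N.
Proof. by case: j => // j /andP [_ h]; exact: ltnW. Qed.

Lemma pjoint_ge0 (R : realType) (V : finType) (T : nat) (F : nat -> V -> V -> R) (Q : V -> R) j zs z :
  cond_family T F -> (forall x, 0 <= Q x) -> (1 <= j <= T)%N -> 0 <= pjoint Q F j zs z.
Proof.
move=> HF HQ hj; apply: sumr_ge0 => x _; apply: mulr_ge0; last exact: (F_ge0 HF).
apply: mulr_ge0 => //; apply: (fwd_ge0 HF); exact: jm1.
Qed.

Lemma fwd_post_ge0 (R : realType) (V : finType) (T : nat) (F : nat -> V -> V -> R) j x z zs :
  cond_family T F -> (1 <= j <= T)%N -> 0 <= fwd_post F j x z zs.
Proof.
move=> HF hj; apply: divr_ge0; last by apply: (fwd_ge0 HF); case/andP: hj.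
apply: mulr_ge0; last exact: (F_ge0 HF).
apply: (fwd_ge0 HF); exact: jm1.
Qed.

Lemma revcond_dist (R : realType) (V : finType) (T : nat) (F : nat -> V -> V -> R) (Q : V -> R) j z :
  cond_family T F -> (forall x, 0 <= Q x) -> (1 <= j <= T)%N -> marg Q F j z != 0 ->
  is_dist (revcond Q F j z).
Proof.
move=> HF HQ hj hm; split.
  move=> zs; apply: divr_ge0; first exact: (pjoint_ge0 _ _ HF HQ hj).
  by apply: (marg_ge0 _ HF HQ); case/andP: hj.
rewrite /revcond -mulr_suml -margE ?divff //; by case/andP: hj.
Qed.

Lemma supp (R : realType) (V : finType) (T : nat) (F : nat -> V -> V -> R) (P Q : V -> R) j z :
  cond_family T F -> (forall x, 0 <= P x) -> (forall x, P x = 0 -> Q x = 0) -> (j <= T)%N ->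
  marg P F j z = 0 -> marg Q F j z = 0.
Proof.
move=> HF HP Hs hj hm.
have Hn : forall i, true -> 0 <= P i * fwd F j i z.
  by move=> i _; apply: mulr_ge0 => //; exact: (fwd_ge0 HF).
have H := psumr_eq0P Hn hm.
rewrite /marg big1 // => x _.
move: (H x isT) => /eqP; rewrite mulf_eq0 => /orP [/eqP /Hs -> | /eqP ->]; by rewrite ?mul0r ?mulr0.
Qed.

Lemma ln_le (R : realType) (y : R) : 0 < y -> ln y <= y - 1.
Proof.
move=> hy; have := @le_ln1Dx R (y - 1).
have -> : 1 + (y - 1) = y by rewrite addrC subrK.
apply; lra.
Qed.

Lemma ln_eq1 (R : realType) (r : R) : 0 < r -> ln r = r - 1 -> r = 1.
Proof.
move=> hr he.
set s := Num.sqrt r.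
have hs : 0 < s by rewrite sqrtr_gt0.
have hrs : r = s * s by rewrite -expr2 sqr_sqrtr // ltW.
have hl : ln r = ln s + ln s by rewrite hrs lnM ?posrE.
have hs1 := ln_le hs.
have h2 : (s - 1) ^+ 2 <= 0.
  clearbody s; rewrite expr2; nra.
have : (s - 1) ^+ 2 = 0 by apply/eqP; rewrite eq_le h2 sqr_ge0.
move/eqP; rewrite sqrf_eq0 subr_eq0 => /eqP hs1'.
by rewrite hrs hs1' mulr1.
Qed.

Lemma gibbs (R : realType) (V : finType) (q p : V -> R) :
  (forall z, 0 <= q z) -> 0 < \sum_z q z -> (forall z, 0 <= p z) -> \sum_z p z = 1 ->
  (forall z, q z != 0 -> p z != 0) ->
  \sum_z q z * ln (q z / \sum_z q z) <= \sum_z q z * ln (p z) ->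
  forall z, p z = q z / \sum_z q z.
Proof.
move=> hq hM hp hp1 hpos hle.
set M := \sum_z q z in hM hle *.
have M0 : M != 0 by rewrite gt_eqF.
pose d := fun z => q z * ln (p z) - q z * ln (q z / M).
have hform : forall z, q z != 0 -> d z = q z * ln (M * p z / q z).
  move=> z q0.
  have qp : 0 < q z by rewrite lt_def q0 hq.
  have pp : 0 < p z by rewrite lt_def hpos // hp.
  rewrite /d -mulrBr -ln_div ?posrE ?divr_gt0 //; congr (_ * ln _).
  by field; apply/andP; split.
have hd : forall z, d z <= M * p z - q z.
  move=> z; have [q0|q0] := eqVneq (q z) 0.
    by rewrite /d q0 !mul0r subrr subr0; apply: mulr_ge0 => //; exact: ltW.
  have qp : 0 < q z by rewrite lt_def q0 hq.
  have pp : 0 < p z by rewrite lt_def hpos // hp.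
  rewrite hform //.
  have := ln_le (y := M * p z / q z) (divr_gt0 (mulr_gt0 hM pp) qp).
  move=> h; apply: le_trans (ler_wpM2l (ltW qp) h) _.
  rewrite le_eqVlt; apply/orP; left; apply/eqP; by field.
have hsum : \sum_z (M * p z - q z - d z) = 0.
  apply/eqP; rewrite eq_le; apply/andP; split; last first.
    by apply: sumr_ge0 => z _; rewrite subr_ge0.
  rewrite sumrB sumrB -mulr_sumr hp1 mulr1 subrr sub0r oppr_le0 /d sumrB subr_ge0.
  exact: hle.
have heq : forall z, d z = M * p z - q z.
  move=> z; apply/eqP; rewrite eq_sym -subr_eq0; apply/eqP.
  by apply: (psumr_eq0P _ hsum) => // i _; rewrite subr_ge0.
move=> z; have [q0|q0] := eqVneq (q z) 0.
  have := heq z; rewrite /d q0 !mul0r subrr subr0 => /esym /eqP.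
  by rewrite mulf_eq0 (negbTE M0) /= => /eqP ->.
have qp : 0 < q z by rewrite lt_def q0 hq.
have pp : 0 < p z by rewrite lt_def hpos // hp.
have hr := heq z; rewrite hform // in hr.
have hr' : ln (M * p z / q z) = M * p z / q z - 1.
  apply: (mulfI q0); rewrite hr; by field.
have := ln_eq1 (divr_gt0 (mulr_gt0 hM pp) qp) hr'.
move=> h1; apply/eqP; rewrite eq_sym; apply/eqP.
have : M * p z = q z.
  by move: h1 => /(congr1 (fun t => t * q z)); rewrite mul1r divfK.
move=> <-; by field.
Qed.

Lemma rhsE (R : realType) (V : finType) (T : nat) (F : nat -> V -> V -> R) (P Q : V -> R) i zt zs :
  cond_family T F -> (forall x, 0 <= P x) -> (forall x, P x = 0 -> Q x = 0) ->
  (1 <= i <= T)%N -> marg P F i zt != 0 ->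
  revcond P F i zt zs * Epost_ratio P Q F i.-1 zs = pjoint Q F i zs zt / marg P F i zt.
Proof.
move=> HF HP Hs hi hmi.
have [m0|m0] := eqVneq (marg P F i.-1 zs) 0.
  have mq0 := supp HF HP Hs (jm1 hi) m0.
  have hE : Epost_ratio P Q F i.-1 zs = 0.
    rewrite /Epost_ratio big1 // => x _; rewrite /post m0 invr0 mulr0 mul0r //.
  by rewrite hE mulr0 /pjoint -mulr_suml -/(marg Q F i.-1 zs) mq0 !mul0r.
have hE : Epost_ratio P Q F i.-1 zs = marg Q F i.-1 zs / marg P F i.-1 zs.
  rewrite /Epost_ratio /marg mulr_suml; apply: eq_bigr => x _.
  rewrite /post -/(marg P F i.-1 zs).
  have [p0|p0] := eqVneq (P x) 0; first by rewrite p0 (Hs x p0) !mul0r.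
  by field; apply/andP; split.
rewrite hE /revcond /pjoint -!mulr_suml -/(marg Q F i.-1 zs) -/(marg P F i.-1 zs).
by field; apply/andP; split.
Qed.

Local Open Scope ereal_scope.

Lemma add_lt2 (R : realType) (a b : \bar R) :
  -oo < a -> -oo < b -> a + b < +oo -> a < +oo /\ b < +oo.
Proof. by move: a b => [a| |] [b| |]. Qed.

Lemma sum_gtNy (R : realType) (I : Type) (r : seq I) (P : pred I) (f : I -> \bar R) :
  (forall i, P i -> -oo < f i) -> -oo < \sum_(i <- r | P i) f i.
Proof.
move=> h; apply: (big_ind (fun e : \bar R => -oo < e)); [exact: ltNyr| |exact: h].
by move=> [u| |] [v| |] //= _ _; rewrite ltNyr.
Qed.

Lemma sum_ltey (R : realType) (I : Type) (r : seq I) (P : pred I) (f : I -> \bar R) :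
  (forall i, P i -> f i < +oo) -> \sum_(i <- r | P i) f i < +oo.
Proof.
move=> h; apply: (big_ind (fun e : \bar R => e < +oo)); [exact: ltry| |exact: h].
by move=> u v hu hv; apply: lte_add_pinfty.
Qed.

Lemma sum_lt_each (R : realType) (I : finType) (f : I -> \bar R) :
  (forall i, -oo < f i) -> \sum_i f i < +oo -> forall i, f i < +oo.
Proof.
move=> h hs i; move: hs; rewrite (bigD1 i) //= => hs.
have hr : -oo < \sum_(j | j != i) f j by apply: sum_gtNy => j _; exact: h.
have := add_lt2 (h i) hr hs; by case.
Qed.

Lemma KLt_gt (R : realType) (V : finType) (a b : V -> R) z :
  -oo < (if a z == 0%R then 0 else if b z == 0%R then +oo else (a z * ln (a z / b z))%:E).
Proof. case: ifP => _; first exact: ltNyr. case: ifP => _ //; exact: ltNyr. Qed.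

Lemma KL_gt (R : realType) (V : finType) (a b : V -> R) : -oo < KL a b.
Proof. by apply: sum_gtNy => z _; apply: KLt_gt. Qed.

Lemma KL_lt (R : realType) (V : finType) (a b : V -> R) :
  KL a b < +oo -> forall zs, (a zs != 0)%R -> (b zs != 0)%R.
Proof.
move=> h zs ha; apply/negP => /eqP hb.
have := sum_lt_each (fun z => KLt_gt a b z) h zs.
by rewrite (negbTE ha) hb eqxx.
Qed.

Lemma KL_fin (R : realType) (V : finType) (a b : V -> R) :
  (forall zs, (a zs != 0)%R -> (b zs != 0)%R) ->
  KL a b = (\sum_zs (if a zs == 0%R then 0%R else a zs * ln (a zs / b zs)))%:E.
Proof.
move=> H; rewrite /KL -sumEFin; apply: eq_bigr => zs _.
case: ifP => ha //; case: ifP => hb //.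
by move: (H zs); rewrite ha hb => /(_ isT).
Qed.

Lemma mul_gtNy (R : realType) (w : R) (e : \bar R) : (0 <= w)%R -> -oo < e -> -oo < w%:E * e.
Proof.
move=> hw; case: e => [e| |] // _; first by rewrite -EFinM ltNyr.
rewrite mulry; move: hw; rewrite le_eqVlt => /orP [/eqP <-|hw].
  by rewrite sgr0 mul0e ltNyr.
by rewrite gtr0_sg // mul1e.
Qed.

Lemma mul_lt (R : realType) (w : R) (e : \bar R) : (0 < w)%R -> w%:E * e < +oo -> e < +oo.
Proof.
move=> hw; case: e => [e| |] //; first by move=> _; exact: ltry.
by rewrite mulry gtr0_sg // mul1e.
Qed.

Local Close Scope ereal_scope.

Lemma pj_ne0 (R : realType) (V : finType) (T : nat) (F : nat -> V -> V -> R) (Q : V -> R) j x z zs :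
  cond_family T F -> (forall x, 0 <= Q x) -> (1 <= j <= T)%N ->
  Q x * fwd F j x z * fwd_post F j x z zs != 0 -> pjoint Q F j zs z != 0.
Proof.
move=> HF HQ hj h; apply/negP => /eqP hp; move: hp; rewrite /pjoint => hp.
have Hn : forall x', true -> 0 <= Q x' * fwd F j.-1 x' zs * F j zs z.
  move=> x' _; apply: mulr_ge0; last exact: (F_ge0 HF).
  apply: mulr_ge0 => //; apply: (fwd_ge0 HF); exact: jm1.
have := psumr_eq0P Hn hp (i:=x) isT.
by rewrite -(cxE Q x z zs HF hj) => h0; rewrite h0 eqxx in h.
Qed.

Lemma marg_ne0 (R : realType) (V : finType) (T : nat) (F : nat -> V -> V -> R) (Q : V -> R) j x z :
  cond_family T F -> (forall x, 0 <= Q x) -> (j <= T)%N ->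
  Q x * fwd F j x z != 0 -> marg Q F j z != 0.
Proof.
move=> HF HQ hj h; apply/negP => /eqP hp; move: hp; rewrite /marg => hp.
have Hn : forall x', true -> 0 <= Q x' * fwd F j x' z.
  move=> x' _; apply: mulr_ge0 => //; exact: (fwd_ge0 HF).
by have := psumr_eq0P Hn hp (i:=x) isT => h0; rewrite h0 eqxx in h.
Qed.

Lemma Bs_form (R : realType) (V : finType) (T : nat) (F : nat -> V -> V -> R) (Q : V -> R) i zt (b : V -> R) :
  cond_family T F -> (forall x, 0 <= Q x) -> (1 <= i <= T)%N ->
  (forall zs, 0 <= b zs) -> (forall zs, pjoint Q F i zs zt != 0 -> b zs != 0) ->
  (\sum_x ((Q x * fwd F i x zt)%:E * KL (fwd_post F i x zt) b))%E =
  ((\sum_x \sum_zs (Q x * fwd F i x zt * fwd_post F i x zt zs) * ln (fwd_post F i x zt zs))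
     - \sum_zs pjoint Q F i zs zt * ln (b zs))%:E.
Proof.
move=> HF HQ hi hb hpos.
transitivity (\sum_x (\sum_zs ((Q x * fwd F i x zt * fwd_post F i x zt zs) * ln (fwd_post F i x zt zs)
   - (Q x * fwd F i x zt * fwd_post F i x zt zs) * ln (b zs)))%:E)%E.
  apply: eq_bigr => x _.
  have [w0|w0] := eqVneq (Q x * fwd F i x zt) 0.
    by rewrite w0 mul0e big1 // => zs _; rewrite !mul0r subrr.
  rewrite KL_fin; last first.
    move=> zs ha; apply: hpos; apply: (pj_ne0 (x:=x) HF HQ hi); exact: mulf_neq0.
  rewrite -EFinM mulr_sumr; congr EFin; apply: eq_bigr => zs _.
  have [a0|a0] := eqVneq (fwd_post F i x zt zs) 0.
    by rewrite a0 !mulr0 !mul0r subrr.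

  have ap : 0 < fwd_post F i x zt zs by rewrite lt_def a0 (fwd_post_ge0 x zt zs HF hi).
  have bp : 0 < b zs.
    rewrite lt_def hb andbT; apply: hpos; apply: (pj_ne0 (x:=x) HF HQ hi); exact: mulf_neq0.
  rewrite ln_div ?posrE //; ring.
rewrite sumEFin; congr EFin.
under eq_bigr => x _ do rewrite sumrB.
rewrite sumrB; congr (_ - _).
rewrite exchange_big; apply: eq_bigr => zs _.
rewrite /pjoint mulr_suml; apply: eq_bigr => x _; by rewrite (cxE Q x zt zs HF hi).
Qed.

Lemma split_ij (R : realType) (V : finType) (T i : nat) (zt : V) (g : nat -> V -> \bar R) :
  (1 <= i <= T)%N ->
  (\sum_(1 <= j < T.+1) \sum_z g j z =
   \sum_(1 <= j < T.+1) \sum_z (if (j == i) && (z == zt) then 0 else g j z) + g i zt)%E.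
Proof.
move=> hi.
have e : forall j z, g j z = ((if (j == i) && (z == zt) then 0 else g j z) +
    (if j == i then (if z == zt then g i zt else 0) else 0))%E.
  move=> j z; case: eqP => [->|_] /=; last by rewrite adde0.
  by case: eqP => [->|_]; rewrite ?add0e ?adde0.
under eq_bigr => j _ do under eq_bigr => z _ do rewrite [g j z]e.
under eq_bigr => j _ do rewrite big_split /=.
rewrite big_split /=; congr (_ + _)%E.
rewrite (eq_bigr (fun j => if j == i then g i zt else 0%E)); last first.
  move=> j _; case: (j == i); last by rewrite big1.
  by rewrite -big_mkcond big_pred1_eq.
by rewrite -big_mkcond big_nat1_eq ltnS hi.
Qed.

Unset Implicit Arguments.

Theorem theorem1 (R : realType) (V : finType) (T : nat)
    (F : nat -> V -> V -> R) (P Q : V -> R) (psistar : nat -> V -> V -> R) :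
  is_dist P -> is_dist Q ->
  cond_family T F ->
  (forall x, P x = 0 -> Q x = 0) ->
  cond_family T psistar ->
  (forall psi, cond_family T psi ->
     (objective Q F T psistar <= objective Q F T psi)%E) ->
  forall i, (1 <= i <= T)%N ->
  forall zt, 0 < marg Q F i zt ->
  forall zs,
    psistar i zt zs =
      revcond P F i zt zs * Epost_ratio P Q F i.-1 zs /
      \sum_(zs' : V) revcond P F i zt zs' * Epost_ratio P Q F i.-1 zs'.
Proof.
move=> HP HQ HF Hs Hstar Hmin i hi zt hzt zs.
have Pge0 : forall x, 0 <= P x by case: HP.
have Qge0 : forall x, 0 <= Q x by case: HQ.
have hi0 : (0 < i)%N by case/andP: hi.
have hiT : (i <= T)%N by case/andP: hi.
have mQ0 : marg Q F i zt != 0 by rewrite gt_eqF.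
have mP0 : marg P F i zt != 0.
  apply/negP => /eqP h; move: mQ0; by rewrite (supp HF Pge0 Hs hiT h) eqxx.
have -> : revcond P F i zt zs * Epost_ratio P Q F i.-1 zs /
      \sum_(zs' : V) revcond P F i zt zs' * Epost_ratio P Q F i.-1 zs' = revcond Q F i zt zs.
  rewrite (eq_bigr (fun zs' => pjoint Q F i zs' zt / marg P F i zt)); last first.
    by move=> zs' _; exact: (rhsE zs' HF Pge0 Hs hi mP0).
  rewrite (rhsE zs HF Pge0 Hs hi mP0) -mulr_suml -margE // /revcond.
  by field; apply/andP; split.
pose psi0 := fun j z => if marg Q F j z == 0 then psistar j z else revcond Q F j z.
have H0fam : cond_family T psi0.
  move=> j hj z; rewrite /psi0; case: eqP => h; first exact: Hstar.
  by apply: (revcond_dist HF Qge0 hj); apply/eqP.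
pose term := fun (psi : nat -> V -> V -> R) x j z =>
  ((Q x * fwd F j x z)%:E * KL (fwd_post F j x z) (psi j z))%E.
have objE : forall psi, objective Q F T psi =
   (\sum_x \sum_(1 <= j < T.+1) \sum_z term psi x j z)%E by [].
have term_gt : forall psi x j z, (1 <= j <= T)%N -> (-oo < term psi x j z)%E.
  move=> psi x j z hj; apply: mul_gtNy; last exact: KL_gt.
  apply: mulr_ge0 => //; apply: (fwd_ge0 HF); by case/andP: hj.
have Hfin0 : (objective Q F T psi0 < +oo)%E.
  rewrite objE; apply: sum_ltey => x _; rewrite big_nat_cond.
  apply: sum_ltey => j /andP [hj _]; apply: sum_ltey => z _.
  rewrite /term; have [w0|w0] := eqVneq (Q x * fwd F j x z) 0.
    by rewrite w0 mul0e ltry.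
  have hm : marg Q F j z != 0 by apply: (marg_ne0 HF Qge0 _ w0); case/andP: hj.
  rewrite KL_fin; first by rewrite -EFinM ltry.
  move=> zs' ha; rewrite /psi0 (negbTE hm) /revcond; apply: mulf_neq0; last by rewrite invr_eq0.
  apply: (pj_ne0 (x:=x) HF Qge0 hj); exact: mulf_neq0.
pose psi' := fun j z => if (j == i) && (z == zt) then revcond Q F i zt else psistar j z.
have H'fam : cond_family T psi'.
  move=> j hj z; rewrite /psi' /=; case: andP => [[/eqP hji /eqP hz]|_]; last exact: Hstar.
  exact: (revcond_dist HF Qge0 hi mQ0).
have Esplit : forall psi, objective Q F T psi =
  (\sum_x \sum_(1 <= j < T.+1) \sum_z (if (j == i) && (z == zt) then 0 else term psi x j z)
    + \sum_x term psi x i zt)%E.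
  move=> psi; rewrite objE -big_split /=; apply: eq_bigr => x _; exact: split_ij.
have Erest : (\sum_x \sum_(1 <= j < T.+1) \sum_z
      (if (j == i) && (z == zt) then 0 else term psi' x j z) =
    \sum_x \sum_(1 <= j < T.+1) \sum_z
      (if (j == i) && (z == zt) then 0 else term psistar x j z))%E.
  apply: eq_bigr => x _; apply: eq_bigr => j _; apply: eq_bigr => z _.
  rewrite /term /psi'; by case: ((j == i) && (z == zt)).
have Hle := Hmin psi' H'fam.
have Hle0 := Hmin psi0 H0fam.
have Hlt := le_lt_trans Hle0 Hfin0.
rewrite Esplit in Hlt; rewrite !Esplit Erest in Hle.
have Rgt : (-oo < \sum_x \sum_(1 <= j < T.+1) \sum_z
      (if (j == i) && (z == zt) then 0 else term psistar x j z))%E.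
  apply: sum_gtNy => x _; rewrite big_nat_cond; apply: sum_gtNy => j /andP [hj _].
  apply: sum_gtNy => z _; case: ifP => _; [exact: ltNyr | exact: term_gt].
have Bgt : (-oo < \sum_x term psistar x i zt)%E by apply: sum_gtNy => x _; exact: term_gt.
have [Rlt Blt] := add_lt2 Rgt Bgt Hlt.
rewrite leeD2lE in Hle; last by rewrite fin_real // Rgt Rlt.
have Hpos : forall z, pjoint Q F i z zt != 0 -> psistar i zt z != 0.
  move=> z hp; apply/negP => /eqP h0; move/negP: hp; apply; apply/eqP.
  rewrite /pjoint big1 // => x _; rewrite -(cxE Q x zt z HF hi).
  have [w0|w0] := eqVneq (Q x * fwd F i x zt) 0; first by rewrite w0 mul0r.
  have [a0|a0] := eqVneq (fwd_post F i x zt z) 0; first by rewrite a0 mulr0.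
  exfalso.
  have hw : 0 < Q x * fwd F i x zt by rewrite lt_def w0 mulr_ge0 // (fwd_ge0 HF).
  have hx := sum_lt_each (fun x => term_gt psistar x i zt hi) Blt x.
  by have := KL_lt (mul_lt hw hx) a0; rewrite h0 eqxx.
have Hpos0 : forall z, pjoint Q F i z zt != 0 -> revcond Q F i zt z != 0.
  move=> z hp; rewrite /revcond; apply: mulf_neq0 => //; by rewrite invr_eq0.
have [d1 d2] := Hstar i hi zt.
have [e1 e2] := revcond_dist HF Qge0 hi mQ0.
move: Hle; rewrite /term /psi' !eqxx /=.
rewrite (Bs_form HF Qge0 hi d1 Hpos) (Bs_form HF Qge0 hi e1 Hpos0) lee_fin => h.
have h' : \sum_z pjoint Q F i z zt * ln (revcond Q F i zt z) <=
          \sum_z pjoint Q F i z zt * ln (psistar i zt z) by lra.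
rewrite /revcond (margE _ _ _ hi0) in h' *.
apply: (gibbs (q := fun z => pjoint Q F i z zt)) => //.
- by move=> z; exact: (pjoint_ge0 z zt HF Qge0 hi).
- by rewrite -margE.
Qed.
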